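(* Let $p>3$ be prime, $t\in\{1,3,p,3p\}$, and $1\le r\le 3p-1$ with $\gcd(r,3p)=1$. Then \[\Lambda(3,r,t)=\begin{cases}\Delta(|r|_p) & \text{if } r\equiv1\pmod 3\text{ and } t\in\{3,3p\},\\ \Delta\!\left(\frac{|r|_p}{\gcd(3,|r|_p)}\right) & \text{if } r\equiv 1\pmod 3\text{ and } t\in\{1,p\},\\ \Delta\!\left(\frac{|r|_p}{\gcd(2,|r|_p)}\right) & \text{if } r\equiv 2\pmod 3.\end{cases}\]
   Context: $|r|_m$ is the multiplicative order of $r$ modulo $m$ (with $|r|_1=1$). $S_k(x):=1+x+\cdots+x^{k-1}$, $S_0:=0$. For $m\ge1$ with $\gcd(r,m)=1$, $\kappa(m,r,t):=\dfrac{m|r|_m}{\gcd(m,\,tS_{|r|_m}(r))}$. For $d\in\{1,3,p,3p\}$, $\Lambda(d,r,t):=\{\ell>0:\ \ell \text{ divides } \frac{|r|_{3p}}{\gcd(\kappa(d,r,t),|r|_{3p})}\text{ and }\gcd(r^{\ell\kappa(d,r,t)}-1,3p)=d\}$. For a positive integer $m$, $\Delta(m):=\{\ell: 0<\ell<m,\ \ell\mid m\}$. *)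

(* Defs.v *)
From mathcomp Require Import all_boot.
Set Implicit Arguments. Unset Strict Implicit. Unset Printing Implicit Defensive.

(* |r|_m : multiplicative order of r modulo m, i.e. the least k >= 1 with
   r^k = 1 (mod m).  For gcd(r,m)=1 this k is <= totient m <= m, so searching
   k in 1..m suffices; for m = 1 this gives 1 (matching |r|_1 = 1). *)
Definition mord (m r : nat) : nat :=
  (find (fun k => r ^ k.+1 == 1 %[mod m]) (iota 0 m)).+1.

Definition Ssum (k x : nat) : nat := \sum_(i < k) x ^ i.

Definition kappa (m r t : nat) : nat :=
  (m * mord m r) %/ gcdn m (t * Ssum (mord m r) r).

Definition Lambda (p d r t : nat) : pred nat :=
  fun l => [&& 0 < l,
               l %| mord (3 * p) r %/ gcdn (kappa d r t) (mord (3 * p) r)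
             & gcdn (r ^ (l * kappa d r t) - 1) (3 * p) == d].

Definition Delta (m : nat) : pred nat :=
  fun l => [&& 0 < l, l < m & l %| m].

(* Main.v *)
Require Import Defs.
From mathcomp Require Import all_boot.
From mathcomp Require cyclic.
From mathcomp Require Import zify.

Lemma pow1 m x q : x == 1 %[mod m] -> x ^ q == 1 %[mod m].
Proof. by move/eqP=> h; apply/eqP; rewrite -modnXm h modnXm exp1n. Qed.

Lemma totient_le m : totient m <= m.
Proof.
rewrite totient_count_coprime.
apply: (@leq_trans (\sum_(0 <= d < m) 1)).
  by apply: leq_sum => i _; exact: leq_b1.
by rewrite sum_nat_const_nat subn0 muln1.
Qed.

Lemma mord_spec m r k : 0 < m -> coprime r m ->
  (r ^ k == 1 %[mod m]) = (mord m r %| k).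
Proof.
move=> m0 cop.
set P := (fun k => r ^ k.+1 == 1 %[mod m]).
have hs : has P (iota 0 m).
  apply/hasP; exists (totient m).-1.
    rewrite mem_iota add0n; have := totient_le m; have := totient_gt0 m.
    rewrite m0; lia.
  rewrite /P prednK ?totient_gt0 //; apply/eqP; exact: cyclic.Euler_exp_totient.
have hf : find P (iota 0 m) < m by rewrite -{2}(size_iota 0 m) -has_find.
have hd : r ^ mord m r == 1 %[mod m].
  have := nth_find 0 hs; rewrite nth_iota // add0n.
have hfd : mord m r = (find P (iota 0 m)).+1 by [].
have hmin : forall j, 0 < j < mord m r -> ~~ (r ^ j == 1 %[mod m]).
  move=> j /andP [j0 jd].
  have := @before_find _ 0 P (iota 0 m) j.-1.
  rewrite nth_iota; last by move: jd; rewrite hfd; lia.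
  rewrite hfd in jd; rewrite add0n => H; have Hj : j.-1 < find P (iota 0 m) by lia.
  by move: (H Hj); rewrite /P prednK // => ->.
have d0 : 0 < mord m r by [].
apply/idP/idP.
- move=> h.
  have h2 : r ^ (k %% mord m r) == 1 %[mod m].
    move: h; rewrite {1}(divn_eq k (mord m r)) expnD (mulnC (k %/ mord m r)) expnM.
    move/eqP; rewrite -modnMml (eqP (@pow1 m _ (k %/ mord m r) hd)) modnMml mul1n.
    by move=> ->.
  case E: (k %% mord m r) => [|j].
    by apply/dvdnP; exists (k %/ mord m r); rewrite {1}(divn_eq k (mord m r)) E addn0.
  have := hmin j.+1; rewrite -E h2 ltn_pmod //.
  by rewrite E => /(_ isT).
- by case/dvdnP=> q ->; rewrite mulnC expnM; apply: pow1.
Qed.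

Lemma cop3p p : prime p -> 3 < p -> coprime 3 p.
Proof.
move=> pp p3; rewrite coprime_sym prime_coprime //.
apply/negP=> /dvdn_leq; lia.
Qed.

Lemma mord3p p r : prime p -> 3 < p -> coprime r (3 * p) ->
  mord (3 * p) r = lcmn (mord 3 r) (mord p r).
Proof.
move=> pp p3 cop.
have p0 : 0 < p by lia.
have c3 := @cop3p p pp p3.
move: (cop); rewrite coprimeMr => /andP [cr3 crp].
apply/eqP; rewrite eqn_dvd dvdn_lcm; apply/and3P; split.
- rewrite -mord_spec ?muln_gt0 // chinese_remainder //.
  by rewrite !mord_spec // dvdn_lcml dvdn_lcmr.
- have := dvdnn (mord (3 * p) r); rewrite -mord_spec ?muln_gt0 //.
  by rewrite chinese_remainder // => /andP [h _]; rewrite -mord_spec.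
- have := dvdnn (mord (3 * p) r); rewrite -mord_spec ?muln_gt0 //.
  by rewrite chinese_remainder // => /andP [_ h]; rewrite -mord_spec.
Qed.

Lemma gcd3p p a : prime p -> 3 < p ->
  (gcdn a (3 * p) == 3) = (3 %| a) && ~~ (p %| a).
Proof.
move=> pp p3.
case pa: (p %| a); rewrite /= ?andbF.
  apply/negP=> /eqP h.
  have : p %| gcdn a (3 * p) by rewrite dvdn_gcd pa dvdn_mull.
  rewrite h => /dvdn_leq; lia.
have cpa : coprime a p by rewrite coprime_sym prime_coprime // pa.
have -> : gcdn a (3 * p) = gcdn a 3.
  apply/eqP; rewrite eqn_dvd !dvdn_gcd dvdn_gcdl /=.
  rewrite (dvdn_trans (dvdn_gcdr _ _) (dvdn_mulr _ (dvdnn 3))) andbT.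
  have cg : coprime (gcdn a (3 * p)) p := coprime_dvdl (dvdn_gcdl _ _) cpa.
  by rewrite -(Gauss_dvdl 3 cg) dvdn_gcdr dvdn_gcdl.
rewrite andbT gcdnC; apply/eqP/idP => [<-|H]; [exact: dvdn_gcdr | exact/gcdn_idPl].
Qed.

Lemma key n k l : 0 < n -> 0 < k -> l %| n %/ gcdn k n ->
  (n %| l * k) = (l == n %/ gcdn k n).
Proof.
move=> n0 k0 hl.
set g := gcdn k n.
have g0 : 0 < g by rewrite gcdn_gt0 k0.
have hn : n = n %/ g * g by rewrite divnK // dvdn_gcdr.
have hk : k = k %/ g * g by rewrite divnK // dvdn_gcdl.
have cop : coprime (n %/ g) (k %/ g).
  rewrite /coprime -(eqn_pmul2r g0) muln_gcdl -hn -hk mul1n /g gcdnC //.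
rewrite {1}hn {1}hk mulnA dvdn_pmul2r // Gauss_dvdl // eqn_dvd hl.
by [].
Qed.

Lemma mord3_1 r : r %% 3 = 1 -> mord 3 r = 1.
Proof. by move=> h; rewrite /mord /= expn1 h. Qed.

Lemma mord3_2 r : r %% 3 = 2 -> mord 3 r = 2.
Proof.
move=> h; rewrite /mord /= expn1 h /=.
by rewrite -modnXm h.
Qed.

Lemma Ssum1 r : Ssum 1 r = 1.
Proof. by rewrite /Ssum big_ord1. Qed.

Lemma Ssum2 r : Ssum 2 r = 1 + r.
Proof. by rewrite /Ssum big_ord_recr big_ord1 /= expn1. Qed.

Lemma lcm2 n : 0 < n -> lcmn 2 n %/ gcdn 2 (lcmn 2 n) = n %/ gcdn 2 n.
Proof.
move=> n0.
have -> : gcdn 2 (lcmn 2 n) = 2 by apply/gcdn_idPl; exact: dvdn_lcml.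
have g0 : 0 < gcdn 2 n by rewrite gcdn_gt0.
have -> : lcmn 2 n = 2 * (n %/ gcdn 2 n).
  apply/eqP; rewrite -(eqn_pmul2r g0) muln_lcm_gcd -mulnA divnK //.
  exact: dvdn_gcdr.
by rewrite mulKn.
Qed.

Theorem lemma5p3 (p t r : nat) :
  prime p -> 3 < p ->
  t \in [:: 1; 3; p; 3 * p] ->
  1 <= r <= 3 * p - 1 ->
  coprime r (3 * p) ->
  [/\ (r %% 3 = 1 -> t \in [:: 3; 3 * p] ->
         Lambda p 3 r t =i Delta (mord p r)),
      (r %% 3 = 1 -> t \in [:: 1; p] ->
         Lambda p 3 r t =i Delta (mord p r %/ gcdn 3 (mord p r)))
    & (r %% 3 = 2 ->
         Lambda p 3 r t =i Delta (mord p r %/ gcdn 2 (mord p r)))].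
Proof.
move=> pp p3 ht /andP [r1 rle] cop.
have p0 : 0 < p by lia.
move: (cop); rewrite coprimeMr => /andP [cr3 crp].
have c3 := @cop3p p pp p3.
have L3 := @mord3p p r pp p3 cop.
set n := mord p r in L3 *.
have n0 : 0 < n by [].
have cond : forall l k, (gcdn (r ^ (l * k) - 1) (3 * p) == 3)
    = (mord 3 r %| l * k) && ~~ (n %| l * k).
  move=> l k; have rpos : 1 <= r ^ (l * k) by rewrite expn_gt0 r1.
  by rewrite gcd3p // -!eqn_mod_dvd // !mord_spec.
have fin : forall m3 l k N, 0 < k -> N = n %/ gcdn k n -> (m3 %| l * k) ->
   [&& 0 < l, l %| N & (m3 %| l * k) && ~~ (n %| l * k)]
   = [&& 0 < l, l < N & l %| N].
  move=> m3 l k N k0 -> h3; rewrite h3 /=; clear h3.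
  case: l => [|l] //=.
  case hl: (l.+1 %| n %/ gcdn k n); rewrite ?andbF //=.
  have g0 : 0 < gcdn k n by rewrite gcdn_gt0 k0.
  have N0 : 0 < n %/ gcdn k n.
    by rewrite divn_gt0 // dvdn_leq // dvdn_gcdr.
  by rewrite key // andbT ltn_neqAle dvdn_leq // andbT.
have LE : forall l, (l \in Lambda p 3 r t) = [&& 0 < l,
    l %| mord (3 * p) r %/ gcdn (kappa 3 r t) (mord (3 * p) r)
  & gcdn (r ^ (l * kappa 3 r t) - 1) (3 * p) == 3] by [].
have DE : forall N l, (l \in Delta N) = [&& 0 < l, l < N & l %| N] by [].
split => [h1 ht2 | h1 ht2 | h2] l; rewrite LE DE cond L3.
- have kE : kappa 3 r t = 1.
    rewrite /kappa mord3_1 // Ssum1 !muln1.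
    by move: ht2; rewrite !inE => /orP [/eqP->|/eqP->]; rewrite ?gcdnMr.
  rewrite kE mord3_1 // lcm1n gcd1n divn1.
  by apply: fin => //; rewrite gcd1n divn1.
- have kE : kappa 3 r t = 3.
    rewrite /kappa mord3_1 // Ssum1 !muln1.
    by move: ht2; rewrite !inE => /orP [/eqP->|/eqP->]; rewrite ?(eqP c3).
  rewrite kE mord3_1 // lcm1n.
  by apply: fin.
- have kE : kappa 3 r t = 2.
    rewrite /kappa mord3_2 // Ssum2.
    have -> : gcdn 3 (t * (1 + r)) = 3.
      apply/gcdn_idPl; apply: dvdn_mull.
      by rewrite /dvdn -modnDmr h2.
    by [].
  rewrite kE mord3_2 // lcm2 //.
  by apply: fin => //; rewrite dvdn_mull.
Qed.
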